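(* Let $R$ be an abelian Rickart $*$-ring and $a,b\in R$. Then $a\perp b$ if and only if $RP(a)RP(b)=0$.
   Context: A Rickart $*$-ring is a $*$-ring in which the right annihilator of every element is generated by a projection ($e=e^2=e^*$); it has unity. For $a\in R$, $RP(a)$ is the unique projection $e$ with $ae=a$ and such that $ax=0\iff ex=0$; equivalently $\{x:ax=0\}=(1-RP(a))R$. Abelian: all idempotents central. Orthogonality: $a\perp b$ iff there is $x\in R$ with $xa=a=ax^*$ and $xb=0=bx^*$. *)

(* Defs.v *)
From HB Require Import structures.
From mathcomp Require Import all_boot all_order all_algebra.
Set Implicit Arguments. Unset Strict Implicit. Unset Printing Implicit Defensive.
Import GRing.Theory.
Local Open Scope ring_scope.

Definition is_star (R : pzRingType) (star : R -> R) : Prop :=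
  [/\ forall x, star (star x) = x,
      forall x y, star (x + y) = star x + star y &
      forall x y, star (x * y) = star y * star x].

Definition is_projection (R : pzRingType) (star : R -> R) (e : R) : Prop :=
  e * e = e /\ star e = e.

Definition rickart (R : pzRingType) (star : R -> R) : Prop :=
  forall a : R, exists e : R, is_projection star e /\
    (forall x : R, a * x = 0 <-> exists y : R, x = e * y).

Definition abelian_ring (R : pzRingType) : Prop :=
  forall e : R, e * e = e -> forall x : R, e * x = x * e.

Definition is_RP (R : pzRingType) (star : R -> R) (a e : R) : Prop :=
  [/\ is_projection star e, a * e = a & forall x : R, a * x = 0 <-> e * x = 0].

Definition orth (R : pzRingType) (star : R -> R) (a b : R) : Prop :=
  exists x : R, [/\ x * a = a, a = a * star x, x * b = 0 & b * star x = 0].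

(* Main.v *)
Require Import Defs.
From mathcomp Require Import all_boot all_order all_algebra.
Local Open Scope ring_scope.
Import GRing.Theory.

Theorem mainTheorem13 (R : pzRingType) (star : R -> R)
  (Hstar : is_star star) (Hrick : rickart star) (Habel : abelian_ring R)
  (a b ea eb : R) (Hea : is_RP star a ea) (Heb : is_RP star b eb) :
  orth star a b <-> ea * eb = 0.
Proof.
case: Hea => [[ea2 eas] aea Ha]; case: Heb => [[eb2 ebs] beb Hb].
split.
- case=> x [_ ax _ bx].
  have ebx : eb * star x = 0 by apply/Hb.
  have aeb : a * eb = 0.
    by rewrite ax -mulrA -(Habel eb eb2) ebx mulr0.
  by apply/Ha.
- move=> e0.
  have eab : ea * b = 0.
    by rewrite -beb -(Habel eb eb2 b) mulrA e0 mul0r.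
  exists ea; split.
  + by rewrite (Habel ea ea2 a).
  + by rewrite eas aea.
  + exact: eab.
  + by rewrite eas -(Habel ea ea2 b).
Qed.
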